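(* Assume the Setting below with $q<n\le2p$. Fix an integer $N\in[2p,4p]$. Then for every $\xi_*\in(0,E_0)$ such that $\Lambda_n(\xi_* )\neq0$ and $\Lambda_n'(\xi_* )<0$ there exists a solution $v_*(t)$ of $du/dt=\sum_{k=n}^Nt^{-k/q}\Lambda_k(u)$, defined for all large $t$, with $v_*(t)=\xi_*+O(t^{-1/q})$ as $t\to\infty$.
   Context: Setting: for the Itô system $d{\bf z}={\bf a}({\bf z},t)dt+{\bf A}({\bf z},t)d{\bf w}$ in $\mathbb R^2$ (${\bf w}$ a 2D Wiener process) with deterministic smooth coefficients, ${\bf a}(0,t)\equiv0$, asymptotic expansions ${\bf a}\sim{\bf a}_0+\sum_{k\ge1}t^{-k/q}{\bf a}_k$, ${\bf A}\sim\sum_{k\ge1}t^{-k/q}{\bf A}_k$ ($q\in\mathbb Z_+$) uniformly near the origin, ${\bf a}_0=(\partial_yH_0,-\partial_xH_0)^T$ with $H_0=|{\bf z}|^2/2+O(|{\bf z}|^3)$ whose level sets $\{H_0=E\}$, $E\in(0,E_0]$, near the origin are closed curves carrying periodic solutions $(x_*,y_* )(t,E)$ (normalized $x_*(0,E)>0$, $y_*(0,E)=0$) of frequency $\nu(E)=1+O(E)$, $\nu\neq0$; $p\in\mathbb Z_+$ minimal with ${\bf A}_p(0)\neq0$. With energy–angle variables $x=X(\varphi,E)=x_*(\varphi/\nu(E),E)$, $y=Y(\varphi,E)=y_*(\varphi/\nu(E),E)$, inverse $E=I(x,y)$, $\varphi=\Phi(x,y)$, and generator $LU=\partial_tU+(\nabla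 U)^T{\bf a}+\frac12\mathrm{tr}({\bf A}^T{\bf H}(U){\bf A})$, the averaged coefficients $\Lambda_k(E)$ and $v_k(E,\varphi)$ ($2\pi$-periodic, zero $\varphi$-mean), $k\ge1$, are uniquely determined order by order by $L[V_N(I,\Phi,t)]=\sum_{k=1}^Nt^{-k/q}\Lambda_k(V_N)+O(t^{-(N+1)/q})$ for every $N$, where $V_N=E+\sum_{k=1}^Nt^{-k/q}v_k(E,\varphi)$. $n\le2p$ is the smallest index with $\Lambda_k\equiv0$ for $k<n$, $\Lambda_n\not\equiv0$. *)

(* Defs.v *)
From Stdlib Require Import Reals.
From Coquelicot Require Import Coquelicot.
Open Scope R_scope.

Definition tpow (t : R) (k q : nat) : R := Rpower t (- (INR k / INR q)).

Definition avg_rhs (Lam : nat -> R -> R) (q n N : nat) (t u : R) : R :=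
  sum_n_m (fun k => tpow t k q * Lam k u) n N.

Definition smooth_on (f : R -> R) (a b : R) : Prop :=
  forall (m : nat) (x : R), a < x < b -> ex_derive_n f m x.

(* Main.v *)
Require Import Defs.
From Stdlib Require Import Reals Lra Lia.
From Coquelicot Require Import Coquelicot.
Open Scope R_scope.

Lemma ball_R (x e y : R) : ball x e y <-> Rabs (y - x) < e.
Proof. reflexivity. Qed.

Lemma lip_cont (f : R -> R) (h K x : R) :
  (forall a b, Rabs a < h -> Rabs b < h -> Rabs (f a - f b) <= K * Rabs (a - b)) ->
  0 <= K -> Rabs x < h -> continuous f x.
Proof.
  intros Hl HK Hx.
  apply filterlim_locally. intros eps.
  assert (Hd : 0 < Rmin (h - Rabs x) (eps / (K + 1))).
  { apply Rmin_pos. lra. apply Rdiv_lt_0_compat. destruct eps; simpl; lra. lra. }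
  exists (mkposreal _ Hd). intros y Hy.
  change (Rabs (y - x) < Rmin (h - Rabs x) (eps / (K + 1))) in Hy. change (Rabs (f y - f x) < eps).
  assert (H1 := Rmin_l (h - Rabs x) (eps / (K + 1))).
  assert (H2 := Rmin_r (h - Rabs x) (eps / (K + 1))).
  assert (Hy' : Rabs y < h).
  { assert (Rabs y <= Rabs x + Rabs (y - x)).
    { replace y with (x + (y - x)) at 1 by ring. apply Rabs_triang. }
    lra. }
  specialize (Hl y x Hy' Hx).
  assert (K * Rabs (y - x) <= K * (eps / (K + 1))).
  { apply Rmult_le_compat_l; lra. }
  assert (K * (eps / (K + 1)) < eps).
  { destruct eps as [e He]; simpl.
    apply Rlt_le_trans with ((K + 1) * (e / (K + 1))).
    apply Rmult_lt_compat_r. apply Rdiv_lt_0_compat; lra. lra.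
    right. field. lra. }
  lra.
Qed.

Lemma int_bound (f : R -> R) (a b B : R) :
  ex_RInt f a b ->
  (forall s, Rmin a b <= s <= Rmax a b -> Rabs (f s) <= B) ->
  Rabs (RInt f a b) <= Rabs (b - a) * B.
Proof.
  intros He Hb.
  destruct (Rle_dec a b) as [Hab|Hab].
  - rewrite Rmin_left in Hb by lra. rewrite Rmax_right in Hb by lra.
    rewrite (Rabs_right (b - a)) by lra. apply abs_RInt_le_const; auto.
  - rewrite Rmin_right in Hb by lra. rewrite Rmax_left in Hb by lra.
    rewrite <- (opp_RInt_swap f b a) by (apply ex_RInt_swap; auto).
    change (opp (RInt f b a)) with (- RInt f b a).
    rewrite Rabs_Ropp. rewrite (Rabs_left (b - a)) by lra.
    replace (- (b - a)) with (a - b) by ring.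
    apply abs_RInt_le_const; auto. lra. apply ex_RInt_swap; auto.
Qed.

Lemma lim_le (u : nat -> R) (l c B : R) :
  is_lim_seq u l -> (forall m, Rabs (u m - c) <= B) -> Rabs (l - c) <= B.
Proof.
  intros Hu Hb.
  assert (H := is_lim_seq_abs (fun m => u m - c) (l - c)
     (is_lim_seq_minus' _ _ _ _ Hu (is_lim_seq_const c))).
  assert (H2 := is_lim_seq_le _ _ _ _ Hb H (is_lim_seq_const B)).
  simpl in H2. exact H2.
Qed.

Lemma geom_zero (D K : R) : (forall j, Rabs D <= K * (1/2) ^ j) -> D = 0.
Proof.
  intros H.
  destruct (Req_dec D 0) as [|HD]; auto. exfalso.
  assert (HK : 0 < K).
  { specialize (H 0%nat). simpl in H. assert (0 < Rabs D) by (apply Rabs_pos_lt; auto). lra. }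
  assert (Hq : Rabs (1/2) < 1) by (rewrite Rabs_right; lra).
  destruct (pow_lt_1_zero (1/2) Hq (Rabs D / K)) as [N HN].
  { apply Rdiv_lt_0_compat; auto. apply Rabs_pos_lt; auto. }
  specialize (HN N (le_n N)). specialize (H N).
  rewrite Rabs_right in HN by (apply Rle_ge, pow_le; lra).
  assert (K * (1/2)^N < K * (Rabs D / K)) by (apply Rmult_lt_compat_l; auto).
  replace (K * (Rabs D / K)) with (Rabs D) in H0 by (field; lra). lra.
Qed.

Fixpoint phi (F : R -> R -> R) (x0 : R) (j : nat) : R -> R :=
  match j with
  | O => fun _ => x0
  | S j => fun s => x0 + RInt (fun u => F u (phi F x0 j u)) 0 s
  end.

Lemma addK (x i : R) : x + i - x = i. Proof. ring. Qed.
Lemma addsub (x i k : R) : (x + i) - (x + k) = minus i k. Proof. unfold minus, plus, opp; simpl; ring. Qed.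

Lemma Rplus_minus_cancel (x i k : R) : (x + i) - (x + k) = i - k. Proof. ring. Qed.
Lemma RInt_minusR (f g : R -> R) a b : ex_RInt f a b -> ex_RInt g a b ->
  RInt (fun x => f x - g x) a b = RInt f a b - RInt g a b.
Proof. intros. apply (RInt_minus (V:=R_CompleteNormedModule)); auto. Qed.
Lemma ex_RInt_minusR (f g : R -> R) a b : ex_RInt f a b -> ex_RInt g a b ->
  ex_RInt (fun x => f x - g x) a b.
Proof. intros. apply (ex_RInt_minus (V:=R_CompleteNormedModule)); auto. Qed.

Section Picard.
Variables (F : R -> R -> R) (x0 M L h : R).
Hypothesis hh : 0 < h.
Hypothesis hLh : 0 <= L /\ L * h <= 1/2.
Hypothesis HF : forall s u, Rabs (F s u) <= M.
Hypothesis HL : forall s u u', Rabs (F s u - F s u') <= L * Rabs (u - u').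
Hypothesis HC : forall (g : R -> R) s, continuous g s -> continuous (fun s => F s (g s)) s.

Lemma M_nonneg : 0 <= M.
Proof. specialize (HF 0 0). pose proof (Rabs_pos (F 0 0)). lra. Qed.

Lemma int_diff (f : R -> R) a b :
  (forall s, continuous f s) -> RInt f 0 a - RInt f 0 b = RInt f b a.
Proof.
  intros Hc.
  assert (He : forall c d, ex_RInt f c d) by (intros; apply (@ex_RInt_continuous R_CompleteNormedModule); auto).
  rewrite <- (RInt_Chasles f b 0 a) by auto.
  rewrite <- (opp_RInt_swap f 0 b) by auto.
  unfold plus, opp; simpl.
  ring.
Qed.

Lemma phi_lip : forall j a b, Rabs (phi F x0 j a - phi F x0 j b) <= M * Rabs (a - b).
Proof.
  pose proof M_nonneg as HM.
  induction j; intros a b; simpl.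
  - replace (x0 - x0) with 0 by ring. rewrite Rabs_R0.
    apply Rmult_le_pos; auto; apply Rabs_pos.
  - assert (Hc : forall s, continuous (fun u => F u (phi F x0 j u)) s).
    { intros s. apply HC. apply (lip_cont _ (Rabs s + 1) M); [intros; apply IHj | auto | lra]. }
    replace (x0 + RInt (fun u => F u (phi F x0 j u)) 0 a -
             (x0 + RInt (fun u => F u (phi F x0 j u)) 0 b))
      with (RInt (fun u => F u (phi F x0 j u)) 0 a - RInt (fun u => F u (phi F x0 j u)) 0 b) by ring.
    rewrite int_diff by auto.
    rewrite Rmult_comm. apply int_bound.
    apply (@ex_RInt_continuous R_CompleteNormedModule); auto. intros; apply HF.
Qed.

Lemma phi_cont : forall j s, continuous (phi F x0 j) s.
Proof.
  intros j s. apply (lip_cont _ (Rabs s + 1) M). intros; apply phi_lip.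
  apply M_nonneg. lra.
Qed.

Lemma phiF_cont : forall j s, continuous (fun u => F u (phi F x0 j u)) s.
Proof. intros; apply HC, phi_cont. Qed.

Lemma phiF_ex : forall j a b, ex_RInt (fun u => F u (phi F x0 j u)) a b.
Proof. intros; apply (@ex_RInt_continuous R_CompleteNormedModule); intros; apply phiF_cont. Qed.

Lemma phi_step : forall j s, Rabs s <= h ->
  Rabs (phi F x0 (S j) s - phi F x0 j s) <= M * h * (1/2) ^ j.
Proof.
  pose proof M_nonneg as HM.
  induction j; intros s Hs.
  - simpl. rewrite addK.
    apply Rle_trans with (Rabs (s - 0) * M).
    apply int_bound. apply (@ex_RInt_continuous R_CompleteNormedModule); intros; apply HC, continuous_const.
    intros; apply HF.
    rewrite Rminus_0_r. replace (M * h * 1) with (h * M) by ring.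
    apply Rmult_le_compat_r; auto.
  - change (Rabs ((x0 + RInt (fun u => F u (phi F x0 (S j) u)) 0 s) -
                  (x0 + RInt (fun u => F u (phi F x0 j u)) 0 s)) <= M * h * (1 / 2) ^ S j).
    rewrite Rplus_minus_cancel.
    rewrite <- RInt_minusR by apply phiF_ex.
    apply Rle_trans with (Rabs (s - 0) * (L * (M * h * (1/2)^j))).
    + apply int_bound.
      * apply ex_RInt_minusR; apply phiF_ex.
      * intros u Hu.
        apply Rle_trans with (L * Rabs (phi F x0 (S j) u - phi F x0 j u)).
        apply HL. apply Rmult_le_compat_l. lra. apply IHj.
        assert (Rmin 0 s <= u <= Rmax 0 s) by exact Hu.
        unfold Rmin, Rmax in H; destruct (Rle_dec 0 s);
        apply Rabs_le; apply Rabs_le_between in Hs; lra.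
    + rewrite Rminus_0_r. simpl.
      assert (0 <= M * h * (1/2)^j).
      { apply Rmult_le_pos. apply Rmult_le_pos; lra. apply pow_le; lra. }
      assert (Rabs s * L <= 1/2).
      { apply Rle_trans with (h * L). apply Rmult_le_compat_r; lra. lra. }
      assert (Rabs s * (L * (M * h * (1 / 2) ^ j)) = (Rabs s * L) * (M * h * (1 / 2) ^ j)) by ring.
      assert ((Rabs s * L) * (M * h * (1 / 2) ^ j) <= (1/2) * (M * h * (1 / 2) ^ j)).
      { apply Rmult_le_compat_r; auto. }
      nra.
Qed.

Lemma phi_cauchy : forall j m s, Rabs s <= h ->
  Rabs (phi F x0 (j + m) s - phi F x0 j s) <= 2 * M * h * (1/2) ^ j * (1 - (1/2) ^ m).
Proof.
  intros j m s Hs. induction m.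
  - rewrite Nat.add_0_r. replace (phi F x0 j s - phi F x0 j s) with 0 by ring.
    rewrite Rabs_R0. simpl. lra.
  - rewrite Nat.add_succ_r.
    replace (phi F x0 (S (j + m)) s - phi F x0 j s) with
      ((phi F x0 (S (j + m)) s - phi F x0 (j+m) s) + (phi F x0 (j + m) s - phi F x0 j s)) by ring.
    eapply Rle_trans. apply Rabs_triang.
    pose proof (phi_step (j + m) s Hs). rewrite pow_add in H.
    replace (2 * M * h * (1 / 2) ^ j * (1 - (1 / 2) ^ S m)) with
      (M * h * ((1 / 2) ^ j * (1 / 2) ^ m) + 2 * M * h * (1 / 2) ^ j * (1 - (1 / 2) ^ m))
      by (cbn [pow]; field).
    lra.
Qed.

Definition wlim (s : R) : R := real (Lim_seq (fun j => phi F x0 j s)).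

Lemma phi_cv s : Rabs s <= h -> is_lim_seq (fun j => phi F x0 j s) (wlim s).
Proof.
  intros Hs. pose proof M_nonneg as HM. unfold wlim. apply Lim_seq_correct'.
  apply ex_lim_seq_cauchy_corr. intros eps.
  set (K := 2 * M * h).
  assert (HK : 0 <= K) by (unfold K; nra).
  assert (Hq : Rabs (1/2) < 1) by (rewrite Rabs_right; lra).
  destruct (pow_lt_1_zero (1/2) Hq (eps / (2 * K + 1))) as [N HN].
  { apply Rdiv_lt_0_compat. destruct eps; simpl; lra. lra. }
  exists N. intros n m Hn Hm.
  assert (Hb : forall k, (N <= k)%nat -> Rabs (phi F x0 k s - phi F x0 N s) <= K * (1/2)^N).
  { intros k Hk. replace k with (N + (k - N))%nat by lia.
    eapply Rle_trans. apply phi_cauchy; auto.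
    unfold K. assert (0 <= (1/2)^(k-N)) by (apply pow_le; lra).
    assert (0 <= 2 * M * h * (1/2)^N) by (apply Rmult_le_pos; [nra | apply pow_le; lra]).
    nra. }
  specialize (HN N (le_n N)). rewrite Rabs_right in HN by (apply Rle_ge, pow_le; lra).
  pose proof (Hb n Hn). pose proof (Hb m Hm).
  replace (phi F x0 n s - phi F x0 m s) with
    ((phi F x0 n s - phi F x0 N s) - (phi F x0 m s - phi F x0 N s)) by ring.
  eapply Rle_lt_trans. apply Rabs_triang.
  rewrite Rabs_Ropp.
  assert ((2 * K + 1) * (1/2)^N < eps).
  { apply Rmult_lt_compat_l with (r := 2 * K + 1) in HN; [|lra].
    replace ((2 * K + 1) * (eps / (2 * K + 1))) with (pos eps) in HN by (field; lra). exact HN. }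
  assert (0 <= (1/2)^N) by (apply pow_le; lra).
  nra.
Qed.

Lemma w_tail s j : Rabs s <= h -> Rabs (wlim s - phi F x0 j s) <= 2 * M * h * (1/2) ^ j.
Proof.
  intros Hs. pose proof M_nonneg as HM.
  apply (lim_le (fun n => phi F x0 (n + j) s)).
  apply (is_lim_seq_incr_n (fun n => phi F x0 n s) j). apply phi_cv; auto.
  intros m. rewrite Nat.add_comm. eapply Rle_trans. apply phi_cauchy; auto.
  assert (0 <= (1/2)^m) by (apply pow_le; lra).
  assert (0 <= 2 * M * h * (1/2)^j) by (apply Rmult_le_pos; [nra | apply pow_le; lra]).
  nra.
Qed.

Lemma w_lip a b : Rabs a <= h -> Rabs b <= h -> Rabs (wlim a - wlim b) <= M * Rabs (a - b).
Proof.
  intros Ha Hb. rewrite <- (Rminus_0_r (wlim a - wlim b)).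
  apply (lim_le (fun n => phi F x0 n a - phi F x0 n b)).
  apply is_lim_seq_minus'; apply phi_cv; auto.
  intros m. rewrite Rminus_0_r. apply phi_lip.
Qed.

Lemma phi_at0 j : phi F x0 j 0 = x0.
Proof. destruct j; simpl; auto. rewrite RInt_point. simpl. change (x0 + 0 = x0). ring. Qed.

Lemma w_at0 : wlim 0 = x0.
Proof.
  assert (H : Rabs (wlim 0 - x0) <= 0).
  { apply (lim_le (fun n => phi F x0 n 0)). apply phi_cv. rewrite Rabs_R0; lra.
    intros m. rewrite phi_at0. replace (x0 - x0) with 0 by ring. rewrite Rabs_R0; lra. }
  pose proof (Rabs_pos (wlim 0 - x0)).
  assert (Rabs (wlim 0 - x0) = 0) by lra.
  apply Rabs_eq_0 in H1. lra.
Qed.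

Lemma w_cont s : Rabs s < h -> continuous wlim s.
Proof.
  intros Hs. apply (lip_cont _ h M); auto.
  intros; apply w_lip; lra. apply M_nonneg.
Qed.

Lemma wF_ex s : Rabs s < h -> ex_RInt (fun u => F u (wlim u)) 0 s.
Proof.
  intros Hs. apply (@ex_RInt_continuous R_CompleteNormedModule). intros z Hz.
  apply HC, w_cont.
  unfold Rmin, Rmax in Hz; destruct (Rle_dec 0 s);
  apply Rabs_def1; apply Rabs_def2 in Hs || (apply Rabs_lt_between in Hs); lra.
Qed.

Lemma w_fix s : Rabs s < h -> wlim s = x0 + RInt (fun u => F u (wlim u)) 0 s.
Proof.
  intros Hs. pose proof M_nonneg as HM.
  apply Rminus_diag_uniq. apply (geom_zero _ (2 * M * h)). intros j.
  assert (Hp : phi F x0 (S j) s = x0 + RInt (fun u => F u (phi F x0 j u)) 0 s) by reflexivity.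
  replace (wlim s - (x0 + RInt (fun u => F u (wlim u)) 0 s)) with
    ((wlim s - phi F x0 (S j) s) +
     (RInt (fun u => F u (phi F x0 j u)) 0 s - RInt (fun u => F u (wlim u)) 0 s))
    by (rewrite Hp; ring).
  eapply Rle_trans. apply Rabs_triang.
  pose proof (w_tail s (S j) (Rlt_le _ _ Hs)) as H1.
  assert (E1 := phiF_ex j 0 s). assert (E2 := wF_ex s Hs).
  rewrite <- (RInt_minusR _ _ 0 s E1 E2).
  assert (H2 : Rabs (RInt (fun u => F u (phi F x0 j u) - F u (wlim u)) 0 s) <=
          Rabs (s - 0) * (L * (2 * M * h * (1/2)^j))).
  { apply int_bound. apply ex_RInt_minusR; assumption.
    intros u Hu. eapply Rle_trans. apply HL. apply Rmult_le_compat_l. lra.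
    rewrite <- Rabs_Ropp. replace (- (phi F x0 j u - wlim u)) with (wlim u - phi F x0 j u) by ring.
    apply w_tail.
    unfold Rmin, Rmax in Hu; destruct (Rle_dec 0 s);
    apply Rabs_le; apply Rabs_lt_between in Hs; lra. }
  rewrite Rminus_0_r in H2.
  assert (0 <= 2 * M * h * (1/2)^j) by (apply Rmult_le_pos; [apply Rmult_le_pos; lra | apply pow_le; lra]).
  assert (Rabs s * L <= 1/2).
  { apply Rle_trans with (h * L). apply Rmult_le_compat_r; lra. lra. }
  assert (Rabs s * (L * (2 * M * h * (1/2)^j)) <= (1/2) * (2 * M * h * (1/2)^j)).
  { rewrite <- Rmult_assoc. apply Rmult_le_compat_r; auto. }
  replace (2 * M * h * (1/2) ^ S j) with ((1/2) * (2 * M * h * (1/2)^j)) in H1 by (cbn [pow]; field).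
  lra.
Qed.

Lemma w_deriv s : 0 < s < h -> is_derive wlim s (F s (wlim s)).
Proof.
  intros Hs.
  assert (Hd : 0 < h - s) by lra.
  assert (Hloc : forall P : R -> Prop, (forall t, Rabs t < h -> P t) -> locally s P).
  { intros P HP. exists (mkposreal _ Hd). intros t Ht.
    change (Rabs (t - s) < h - s) in Ht. apply HP.
    apply Rabs_lt_between in Ht. apply Rabs_def1; lra. }
  assert (H : is_derive (fun t => RInt (fun u => F u (wlim u)) 0 t) s (F s (wlim s))).
  { apply (is_derive_RInt (V:=R_NormedModule) (fun u => F u (wlim u)) (fun t => RInt (fun u => F u (wlim u)) 0 t) 0 s).
    - apply Hloc. intros t Ht. apply (RInt_correct (V:=R_CompleteNormedModule)). apply wF_ex; auto.
    - apply HC. apply w_cont. rewrite Rabs_right; lra. }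
  assert (H2 := is_derive_plus (K:=R_AbsRing) (V:=R_NormedModule) _ _ s _ _ (is_derive_const x0 s) H).
  rewrite plus_zero_l in H2.
  apply is_derive_ext_loc with (2 := H2).
  apply Hloc. intros t Ht. rewrite w_fix; auto.
Qed.
End Picard.

Lemma picard (F : R -> R -> R) (x0 M L h : R) :
  0 < h -> 0 <= L -> L * h <= 1/2 ->
  (forall s u, Rabs (F s u) <= M) ->
  (forall s u u', Rabs (F s u - F s u') <= L * Rabs (u - u')) ->
  (forall (g : R -> R) s, continuous g s -> continuous (fun s => F s (g s)) s) ->
  exists w : R -> R, forall s, 0 < s < h ->
    is_derive w s (F s (w s)) /\ Rabs (w s - x0) <= M * s.
Proof.
  intros hh hL hLh HF HL HC.
  exists (wlim F x0). intros s Hs. split.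
  - apply w_deriv with (M := M) (L := L) (h := h); auto.
  - rewrite <- (w_at0 F x0 M L h) at 2 by auto.
    replace s with (Rabs (s - 0)) at 2 by (rewrite Rminus_0_r, Rabs_right; lra).
    apply (w_lip F x0 M L h); auto; rewrite ?Rabs_R0, ?Rabs_right; lra.
Qed.

Section Sm.
Variables (f : R -> R) (E0 : R).
Hypothesis Hs : forall (m : nat) (x : R), 0 < x < E0 -> ex_derive_n f m x.

Lemma sm_ex_derive x : 0 < x < E0 -> ex_derive f x.
Proof. intros H. exact (Hs 1 x H). Qed.

Lemma sm_cont x : 0 < x < E0 -> continuous f x.
Proof. intros H. apply (ex_derive_continuous (K:=R_AbsRing) (V:=R_NormedModule) f). apply sm_ex_derive; auto. Qed.

Lemma sm_dcont x : 0 < x < E0 -> continuous (Derive f) x.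
Proof. intros H. apply (ex_derive_continuous (K:=R_AbsRing) (V:=R_NormedModule) (Derive f)). exact (Hs 2 x H). Qed.

Lemma abs_cont_pt (g : R -> R) x : continuous g x -> continuity_pt (fun u => Rabs (g u)) x.
Proof.
  intros H. apply continuity_pt_filterlim.
  apply (continuous_comp g Rabs x H). apply continuous_Rabs.
Qed.

Lemma sm_bounds a b : 0 < a -> a <= b -> b < E0 ->
  exists K, 0 <= K /\ (forall u, a <= u <= b -> Rabs (f u) <= K) /\
    (forall u u', a <= u <= b -> a <= u' <= b -> Rabs (f u - f u') <= K * Rabs (u - u')).
Proof.
  intros Ha Hab Hb.
  destruct (continuity_ab_maj (fun u => Rabs (f u)) a b Hab) as [m1 [H1 _]].
  { intros c Hc. apply abs_cont_pt, sm_cont. lra. }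
  destruct (continuity_ab_maj (fun u => Rabs (Derive f u)) a b Hab) as [m2 [H2 _]].
  { intros c Hc. apply abs_cont_pt, sm_dcont. lra. }
  exists (Rabs (f m1) + Rabs (Derive f m2)).
  pose proof (Rabs_pos (f m1)). pose proof (Rabs_pos (Derive f m2)).
  split; [lra|split].
  - intros u Hu. specialize (H1 u Hu). simpl in H1. lra.
  - intros u u' Hu Hu'.
    destruct (MVT_gen f u' u (Derive f)) as [c [Hc Heq]].
    + intros x Hx. apply Derive_correct. apply sm_ex_derive.
      assert (Rmin u' u >= a) by (unfold Rmin; destruct Rle_dec; lra).
      assert (Rmax u' u <= b) by (unfold Rmax; destruct Rle_dec; lra). lra.
    + intros x Hx. apply continuity_pt_filterlim. apply sm_cont.
      assert (Rmin u' u >= a) by (unfold Rmin; destruct Rle_dec; lra).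
      assert (Rmax u' u <= b) by (unfold Rmax; destruct Rle_dec; lra). lra.
    + rewrite Heq. rewrite Rabs_mult.
      assert (a <= c <= b).
      { assert (Rmin u' u >= a) by (unfold Rmin; destruct Rle_dec; lra).
        assert (Rmax u' u <= b) by (unfold Rmax; destruct Rle_dec; lra). lra. }
      specialize (H2 c H3). simpl in H2.
      apply Rmult_le_compat_r. apply Rabs_pos. lra.
Qed.
End Sm.

Lemma unif_choice (P : nat -> R -> Prop) (n N : nat) :
  (forall k x y, x <= y -> P k x -> P k y) ->
  (forall k, (n <= k <= N)%nat -> exists x, P k x) ->
  exists x, forall k, (n <= k <= N)%nat -> P k x.
Proof.
  intros Hm. induction N as [|N IH]; intros H.
  - destruct (Nat.le_gt_cases n 0) as [Hn|Hn].
    + destruct (H 0%nat) as [x Hx]. lia. exists x. intros k Hk.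
      replace k with 0%nat by lia. auto.
    + exists 0. intros k Hk. lia.
  - destruct IH as [x1 Hx1]. { intros k Hk. apply H. lia. }
    destruct (Nat.le_gt_cases n (S N)) as [Hn|Hn].
    + destruct (H (S N)) as [x2 Hx2]. lia.
      exists (Rmax x1 x2). intros k Hk.
      destruct (Nat.eq_dec k (S N)) as [->|Hne].
      * apply Hm with x2. apply Rmax_r. auto.
      * apply Hm with x1. apply Rmax_l. apply Hx1. lia.
    + exists 0. intros k Hk. lia.
Qed.

Lemma sum_diff (a b : nat -> R) (n N : nat) (B : R) :
  (forall k, (n <= k <= N)%nat -> Rabs (a k - b k) <= B) -> 0 <= B ->
  Rabs (sum_n_m a n N - sum_n_m b n N) <= INR (S N) * B.
Proof.
  intros H HB. induction N as [|N IH].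
  - destruct (Nat.le_gt_cases n 0) as [Hn|Hn].
    + replace n with 0%nat by lia. rewrite !sum_n_n. simpl.
      rewrite Rmult_1_l. apply H. lia.
    + rewrite !sum_n_m_zero by lia. change (Rabs (0 - 0) <= INR 1 * B).
      rewrite Rminus_0_r, Rabs_R0. simpl; lra.
  - destruct (Nat.le_gt_cases n (S N)) as [Hn|Hn].
    + rewrite !sum_n_Sm by lia.
      change (Rabs ((sum_n_m a n N + a (S N)) - (sum_n_m b n N + b (S N))) <= INR (S (S N)) * B).
      replace ((sum_n_m a n N + a (S N)) - (sum_n_m b n N + b (S N))) with
        ((sum_n_m a n N - sum_n_m b n N) + (a (S N) - b (S N))) by ring.
      eapply Rle_trans. apply Rabs_triang.
      assert (Rabs (sum_n_m a n N - sum_n_m b n N) <= INR (S N) * B).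
      { apply IH. intros; apply H; lia. }
      assert (Rabs (a (S N) - b (S N)) <= B) by (apply H; lia).
      rewrite (S_INR (S N)). lra.
    + rewrite !sum_n_m_zero by lia. change (Rabs (0 - 0) <= INR (S (S N)) * B).
      rewrite Rminus_0_r, Rabs_R0. apply Rmult_le_pos; auto. apply pos_INR.
Qed.

Lemma sum_bound (a : nat -> R) (n N : nat) (B : R) :
  (forall k, (n <= k <= N)%nat -> Rabs (a k) <= B) -> 0 <= B ->
  Rabs (sum_n_m a n N) <= INR (S N) * B.
Proof.
  intros H HB.
  assert (E : sum_n_m (fun _ => 0) n N = 0).
  { apply (sum_n_m_const_zero (G:=R_AbelianGroup)). }
  replace (sum_n_m a n N) with (sum_n_m a n N - sum_n_m (fun _ => 0) n N) by (rewrite E; ring).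
  apply sum_diff; auto. intros; rewrite Rminus_0_r; auto.
Qed.

Definition clamp (lo hi u : R) : R := Rmax lo (Rmin hi u).

Lemma clamp_lip lo hi u u' : Rabs (clamp lo hi u - clamp lo hi u') <= Rabs (u - u').
Proof.
  unfold clamp, Rmax, Rmin.
  destruct (Rle_dec hi u); destruct (Rle_dec hi u');
  repeat (match goal with |- context [Rle_dec ?a ?b] => destruct (Rle_dec a b) end);
  unfold Rabs; repeat (destruct Rcase_abs); lra.
Qed.

Lemma clamp_range lo hi u : lo <= hi -> lo <= clamp lo hi u <= hi.
Proof.
  intros H. unfold clamp, Rmax, Rmin.
  destruct (Rle_dec hi u);
  repeat (match goal with |- context [Rle_dec ?a ?b] => destruct (Rle_dec a b) end); lra.
Qed.

Lemma clamp_id lo hi u : lo <= u <= hi -> clamp lo hi u = u.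
Proof.
  intros H. unfold clamp, Rmax, Rmin.
  destruct (Rle_dec hi u);
  repeat (match goal with |- context [Rle_dec ?a ?b] => destruct (Rle_dec a b) end); lra.
Qed.

Lemma clamp_cont lo hi x : continuous (clamp lo hi) x.
Proof.
  apply (lip_cont _ (Rabs x + 1) 1). intros. rewrite Rmult_1_l. apply clamp_lip. lra. lra.
Qed.

Lemma pow_cont (g : R -> R) s m : continuous g s -> continuous (fun s => g s ^ m) s.
Proof.
  intros H. induction m.
  - simpl. apply continuous_const.
  - simpl. apply (continuous_mult (K:=R_AbsRing) g (fun s => g s ^ m)); auto.
Qed.

Lemma sum_cont (f : nat -> R -> R) (n N : nat) s :
  (forall k, (n <= k <= N)%nat -> continuous (f k) s) ->
  continuous (fun s => sum_n_m (fun k => f k s) n N) s.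
Proof.
  intros H. induction N as [|N IH].
  - destruct (Nat.le_gt_cases n 0) as [Hn|Hn].
    + replace n with 0%nat by lia.
      apply continuous_ext with (f := f 0%nat). intros; rewrite sum_n_n; auto.
      apply H; lia.
    + apply continuous_ext with (f := fun _ => 0). intros; rewrite sum_n_m_zero by lia; auto.
      apply continuous_const.
  - destruct (Nat.le_gt_cases n (S N)) as [Hn|Hn].
    + apply continuous_ext with
        (f := fun s => plus (sum_n_m (fun k => f k s) n N) (f (S N) s)).
      intros; rewrite sum_n_Sm by lia; auto.
      apply (continuous_plus (K:=R_AbsRing) (V:=R_NormedModule)).
      apply IH. intros; apply H; lia. apply H; lia.
    + apply continuous_ext with (f := fun _ => 0). intros; rewrite sum_n_m_zero by lia; auto.
      apply continuous_const.
Qed.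

Lemma pow01 c m : 0 <= c <= 1 -> 0 <= c ^ m <= 1.
Proof.
  intros H. induction m; simpl. lra.
  split. apply Rmult_le_pos; lra. nra.
Qed.

Lemma sum_mult_lR (a : R) (u : nat -> R) n m :
  sum_n_m (fun k => a * u k) n m = a * sum_n_m u n m.
Proof. apply (sum_n_m_mult_l (K:=R_Ring)). Qed.

Theorem lemma4 (q p n N : nat) (E0 : R) (Lam : nat -> R -> R)
  (hq : (1 <= q)%nat) (hp : (1 <= p)%nat) (hE0 : 0 < E0)
  (hqn : (q < n)%nat) (hn2p : (n <= 2 * p)%nat)
  (hsmooth : forall k : nat, (1 <= k)%nat -> smooth_on (Lam k) 0 E0)
  (hvanish : forall (k : nat) (E : R), (1 <= k)%nat -> (k < n)%nat ->
               0 < E <= E0 -> Lam k E = 0)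
  (hnz : exists E : R, 0 < E <= E0 /\ Lam n E <> 0)
  (hN : (2 * p <= N <= 4 * p)%nat)
  (xi : R) (hxi : 0 < xi < E0)
  (hL : Lam n xi <> 0) (hL' : Derive (Lam n) xi < 0) :
  exists (T C : R) (v : R -> R),
    0 < T /\
    forall t : R, T < t ->
      0 < v t < E0 /\
      is_derive v t (avg_rhs Lam q n N t (v t)) /\
      Rabs (v t - xi) <= C * Rpower t (- (1 / INR q)).
Proof.
  set (d := Rmin xi (E0 - xi) / 2).
  assert (Hd1 := Rmin_l xi (E0 - xi)). assert (Hd2 := Rmin_r xi (E0 - xi)).
  assert (Hd0 : 0 < Rmin xi (E0 - xi)) by (apply Rmin_pos; lra).
  assert (Hd : 0 < d) by (unfold d; lra).
  assert (Hlo : 0 < xi - d) by (unfold d; lra).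
  assert (Hhi : xi + d < E0) by (unfold d; lra).
  set (lo := xi - d). set (hi := xi + d).
  assert (Hqpos : 0 < INR q) by (apply lt_0_INR; lia).
  destruct (unif_choice (fun k x => 0 <= x /\ (forall u, lo <= u <= hi -> Rabs (Lam k u) <= x) /\
     (forall u u', lo <= u <= hi -> lo <= u' <= hi -> Rabs (Lam k u - Lam k u') <= x * Rabs (u - u')))
     n N) as [K HK].
  { intros k x y Hxy [H0 [H1 H2]]. split; [lra|split].
    - intros u Hu. specialize (H1 u Hu). lra.
    - intros u u' Hu Hu'. specialize (H2 u u' Hu Hu').
      pose proof (Rabs_pos (u - u')). nra. }
  { intros k Hk. apply (sm_bounds (Lam k) E0).
    apply (hsmooth k). lia. unfold lo; lra. unfold lo, hi; lra. unfold hi; lra. }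
  assert (HK0 : 0 <= K).
  { destruct (HK n) as [H _]. lia. auto. }
  set (G := fun s u => - INR q * sum_n_m (fun k => clamp 0 1 s ^ (k - q - 1) * Lam k (clamp lo hi u)) n N).
  set (Kb := INR q * (INR (S N) * K)).
  assert (HKb : 0 <= Kb).
  { unfold Kb. apply Rmult_le_pos. lra. apply Rmult_le_pos; auto. apply pos_INR. }
  assert (Hrng : lo <= hi) by (unfold lo, hi; lra).
  assert (HGb : forall s u, Rabs (G s u) <= Kb).
  { intros s u. unfold G, Kb. rewrite Rabs_mult, Rabs_Ropp, (Rabs_right (INR q)) by lra.
    apply Rmult_le_compat_l. lra.
    apply sum_bound; auto. intros k Hk. rewrite Rabs_mult.
    pose proof (pow01 (clamp 0 1 s) (k - q - 1) (clamp_range 0 1 s ltac:(lra))).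
    rewrite (Rabs_right (clamp 0 1 s ^ (k - q - 1))) by lra.
    destruct (HK k Hk) as [_ [H1 _]].
    specialize (H1 (clamp lo hi u) (clamp_range lo hi u Hrng)).
    pose proof (Rabs_pos (Lam k (clamp lo hi u))). nra. }
  assert (HGl : forall s u u', Rabs (G s u - G s u') <= Kb * Rabs (u - u')).
  { intros s u u'. unfold G, Kb.
    replace (- INR q * sum_n_m (fun k => clamp 0 1 s ^ (k - q - 1) * Lam k (clamp lo hi u)) n N -
             - INR q * sum_n_m (fun k => clamp 0 1 s ^ (k - q - 1) * Lam k (clamp lo hi u')) n N)
      with (- INR q * (sum_n_m (fun k => clamp 0 1 s ^ (k - q - 1) * Lam k (clamp lo hi u)) n N -
                       sum_n_m (fun k => clamp 0 1 s ^ (k - q - 1) * Lam k (clamp lo hi u')) n N)) by ring.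
    rewrite Rabs_mult, Rabs_Ropp, (Rabs_right (INR q)) by lra.
    rewrite !Rmult_assoc. apply Rmult_le_compat_l. lra.
    apply sum_diff. 2: { apply Rmult_le_pos; auto; apply Rabs_pos. }
    intros k Hk.
    replace (clamp 0 1 s ^ (k - q - 1) * Lam k (clamp lo hi u) -
             clamp 0 1 s ^ (k - q - 1) * Lam k (clamp lo hi u'))
      with (clamp 0 1 s ^ (k - q - 1) * (Lam k (clamp lo hi u) - Lam k (clamp lo hi u'))) by ring.
    rewrite Rabs_mult.
    pose proof (pow01 (clamp 0 1 s) (k - q - 1) (clamp_range 0 1 s ltac:(lra))).
    rewrite (Rabs_right (clamp 0 1 s ^ (k - q - 1))) by lra.
    destruct (HK k Hk) as [_ [_ H2]].
    specialize (H2 (clamp lo hi u) (clamp lo hi u') (clamp_range lo hi u Hrng) (clamp_range lo hi u' Hrng)).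
    pose proof (clamp_lip lo hi u u').
    pose proof (Rabs_pos (Lam k (clamp lo hi u) - Lam k (clamp lo hi u'))).
    pose proof (Rabs_pos (clamp lo hi u - clamp lo hi u')).
    assert (K * Rabs (clamp lo hi u - clamp lo hi u') <= K * Rabs (u - u')) by (apply Rmult_le_compat_l; auto).
    nra. }
  assert (HGc : forall (g : R -> R) s, continuous g s -> continuous (fun s => G s (g s)) s).
  { intros g s Hg. unfold G.
    apply (continuous_mult (K:=R_AbsRing) (fun _ => - INR q)). apply continuous_const.
    apply (sum_cont (fun k s => clamp 0 1 s ^ (k - q - 1) * Lam k (clamp lo hi (g s)))).
    intros k Hk.
    apply (continuous_mult (K:=R_AbsRing) (fun s => clamp 0 1 s ^ (k - q - 1))).
    apply pow_cont. apply clamp_cont.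
    apply (continuous_comp (fun s => clamp lo hi (g s)) (Lam k)).
    apply (continuous_comp g (clamp lo hi)); auto. apply clamp_cont.
    apply (sm_cont (Lam k) E0). apply (hsmooth k). lia.
    pose proof (clamp_range lo hi (g s) Hrng). unfold lo, hi in *; lra. }
  set (h := Rmin (Rmin 1 (d / (Kb + 1))) (1 / (2 * (Kb + 1)))).
  assert (Hh1 : h <= 1) by (unfold h; pose proof (Rmin_l (Rmin 1 (d / (Kb + 1))) (1 / (2 * (Kb + 1)))); pose proof (Rmin_l 1 (d / (Kb + 1))); lra).
  assert (Hh2 : h <= d / (Kb + 1)) by (unfold h; pose proof (Rmin_l (Rmin 1 (d / (Kb + 1))) (1 / (2 * (Kb + 1)))); pose proof (Rmin_r 1 (d / (Kb + 1))); lra).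
  assert (Hh3 : h <= 1 / (2 * (Kb + 1))) by (unfold h; apply Rmin_r).
  assert (Hh0 : 0 < h).
  { unfold h. apply Rmin_pos. apply Rmin_pos. lra. apply Rdiv_lt_0_compat; lra.
    apply Rdiv_lt_0_compat; lra. }
  assert (HLh : Kb * h <= 1/2).
  { apply Rle_trans with (Kb * (1 / (2 * (Kb + 1)))). apply Rmult_le_compat_l; auto.
    apply (Rmult_le_reg_r (2 * (Kb + 1))). lra.
    replace (Kb * (1 / (2 * (Kb + 1))) * (2 * (Kb + 1))) with Kb by (field; lra). lra. }
  assert (HMh : Kb * h <= d).
  { apply Rle_trans with (Kb * (d / (Kb + 1))). apply Rmult_le_compat_l; auto.
    apply (Rmult_le_reg_r (Kb + 1)). lra.
    replace (Kb * (d / (Kb + 1)) * (Kb + 1)) with (Kb * d) by (field; lra). nra. }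
  destruct (picard G xi Kb Kb h Hh0 HKb HLh HGb HGl HGc) as [w Hw].
  set (T := exp (- INR q * ln h)).
  set (sg := fun t => Rpower t (- (1 / INR q))).
  exists T, Kb, (fun t => w (sg t)).
  split. apply exp_pos.
  intros t Ht.
  assert (Ht0 : 0 < t) by (pose proof (exp_pos (- INR q * ln h)); fold T in H; lra).
  assert (Hs0 : 0 < sg t) by (unfold sg, Rpower; apply exp_pos).
  assert (Hsh : sg t < h).
  { unfold sg, Rpower. rewrite <- (exp_ln h Hh0). apply exp_increasing.
    assert (ln T < ln t) by (apply ln_increasing; auto; apply exp_pos).
    unfold T in H. rewrite ln_exp in H.
    apply (Rmult_lt_reg_l (INR q)); auto.
    replace (INR q * (- (1 / INR q) * ln t)) with (- ln t) by (field; lra). lra. }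
  destruct (Hw (sg t) (conj Hs0 Hsh)) as [Hder Hbd].
  assert (Hwd : Rabs (w (sg t) - xi) <= d).
  { eapply Rle_trans. apply Hbd. apply Rle_trans with (Kb * h); auto.
    apply Rmult_le_compat_l; lra. }
  apply Rabs_le_between in Hwd.
  split; [|split].
  - unfold lo, hi in *; lra.
  - assert (Hsd : is_derive sg t (- (1 / INR q) * Rpower t (- (1 / INR q) - 1))).
    { apply is_derive_Reals. apply derivable_pt_lim_power; auto. }
    assert (H := is_derive_comp w sg t _ _ Hder Hsd).
    replace (avg_rhs Lam q n N t (w (sg t))) with
      (scal (- (1 / INR q) * Rpower t (- (1 / INR q) - 1)) (G (sg t) (w (sg t)))); [exact H|].
    unfold G, avg_rhs.
    rewrite (clamp_id 0 1 (sg t)) by lra.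
    rewrite (clamp_id lo hi (w (sg t))) by (unfold lo, hi; lra).
    change (scal ?a ?b) with (a * b).
    replace (- (1 / INR q) * Rpower t (- (1 / INR q) - 1) *
      (- INR q * sum_n_m (fun k => sg t ^ (k - q - 1) * Lam k (w (sg t))) n N))
      with (Rpower t (- (1 / INR q) - 1) *
              (sum_n_m (fun k => sg t ^ (k - q - 1) * Lam k (w (sg t))) n N))
      by (field; lra).
    rewrite <- sum_mult_lR.
    apply sum_n_m_ext_loc. intros k Hk.
    unfold tpow. rewrite <- Rmult_assoc. f_equal.
    unfold sg. rewrite <- Rpower_pow by (unfold Rpower; apply exp_pos).
    rewrite Rpower_mult. rewrite <- Rpower_plus. f_equal.
    replace (k - q - 1)%nat with (k - S q)%nat by lia.
    rewrite minus_INR by lia. rewrite S_INR. field. lra.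
  - exact Hbd.
Qed.
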